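(* Let $n\ge3$, $m_1,\dots,m_n>0$, $M=\mathrm{diag}(m_1,\dots,m_n)$, $\omega\in\mathbb R$, and let $\varphi_1,\dots,\varphi_n$ be longitudes of a fixed-point configuration on the equator. Let $H,G$ be the $n\times n$ symmetric matrices with entries (for $i\ne j$) $H_{ij}=\frac{m_im_j}{\sin^3d_{ij}}$, $H_{ii}=-\sum_{j\neq i}H_{ij}\cos d_{ij}$, $G_{ij}=\frac{-2m_im_j\cos d_{ij}}{\sin^3 d_{ij}}$, $G_{ii}=-\sum_{j\neq i}G_{ij}$, let $H_\omega=H-\omega^2M$, and let $$L=\begin{bmatrix}0&0&M^{-1}&0\\0&0&0&M^{-1}\\H_\omega&0&0&0\\0&G&0&0\end{bmatrix}\in\mathbb C^{4n\times4n}.$$ Then $H_\omega M^{-1}$ and $GM^{-1}$ are diagonalizable. If $u\in\mathbb C^n$ is an eigenvector of $H_\omega M^{-1}$ (respectively of $GM^{-1}$) with eigenvalue $\lambda\neq0$, then there is a two-dimensional $L$-invariant subspace of $\mathbb C^{4n}$ on which, in a suitable basis, $L$ is $\begin{bmatrix}\sqrt\lambda&0\\0&-\sqrt\lambda\end{bmatrix}$. If $u$ is an eigenvector of $H_\omega M^{-1}$ (respectively of $GM^{-1}$) with eigenvalue $0$, then there is a two-dimensional $L$-invariant subspace of $\mathbb C^{4n}$ on which, in a suitable basis, $L$ is $\begin{bmatrix}0&1\\0&0\end{bmatrix}$.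
   Context: Masses lie on the equator of the unit sphere at longitudes $\varphi_i$, with geodesic distances $d_{ij}\in(0,\pi)$ for $i\ne j$. The force function is $V=\sum_{i<j}m_im_j\cot d_{ij}$ and a fixed point is a critical point of $V$ on the configuration space $\{d_{ij}\notin\{0,\pi\}\}\subset(\mathbb S^2)^n$. Here $\sqrt\lambda$ denotes any complex square root of $\lambda$. *)

(* Defs.v *)
From HB Require Import structures.
From mathcomp Require Import all_boot all_order all_algebra.
From mathcomp Require Import all_classical all_reals.
From mathcomp Require Import topology normedtype derive realfun trigo.
From mathcomp Require Import complex.
Set Implicit Arguments. Unset Strict Implicit. Unset Printing Implicit Defensive.
Import Order.TTheory GRing.Theory Num.Theory.
Import numFieldNormedType.Exports.
Local Open Scope ring_scope.
Local Open Scope complex_scope.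

Section Defs.
Variables (R : realType) (n : nat).

Definition cot (x : R) : R := cos x / sin x.

(* Points on the unit sphere in longitude/latitude coordinates
   q_i = (cos th_i cos phi_i, cos th_i sin phi_i, sin th_i);
   cosine of the geodesic distance between q_i and q_j. *)
Definition sph_cos (phi th : 'I_n -> R) (i j : 'I_n) : R :=
  cos (th i) * cos (th j) * cos (phi i - phi j) + sin (th i) * sin (th j).

Definition sph_dist (phi th : 'I_n -> R) (i j : 'I_n) : R :=
  acos (sph_cos phi th i j).

Definition equator : 'I_n -> R := fun _ => 0.

Definition eq_dist (phi : 'I_n -> R) (i j : 'I_n) : R := sph_dist phi equator i j.

Definition forceV (m : 'I_n -> R) (phi th : 'I_n -> R) : R :=
  \sum_(i < n) \sum_(j < n | (i < j)%N) m i * m j * cot (sph_dist phi th i j).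

Definition shift (f : 'I_n -> R) (k : 'I_n) (t : R) : 'I_n -> R :=
  fun i => if i == k then f i + t else f i.

Definition in_config_space (phi : 'I_n -> R) : Prop :=
  forall i j : 'I_n, i != j -> eq_dist phi i j != 0 /\ eq_dist phi i j != pi.

(* fixed point: critical point of V on the configuration space of (S^2)^n,
   expressed in the (longitude, latitude) chart around the equatorial
   configuration: all partial derivatives of V vanish. *)
Definition fixed_point (m : 'I_n -> R) (phi : 'I_n -> R) : Prop :=
  in_config_space phi /\
  forall k : 'I_n,
    is_derive (0 : R) (1 : R) (fun t => forceV m (shift phi k t) equator) 0 /\
    is_derive (0 : R) (1 : R) (fun t => forceV m phi (shift equator k t)) 0.

Definition Hmat (m phi : 'I_n -> R) : 'M[R]_n :=
  \matrix_(i, j)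
    if i == j then
      - \sum_(k < n | k != i)
          (m i * m k / sin (eq_dist phi i k) ^+ 3) * cos (eq_dist phi i k)
    else m i * m j / sin (eq_dist phi i j) ^+ 3.

Definition Gmat (m phi : 'I_n -> R) : 'M[R]_n :=
  \matrix_(i, j)
    if i == j then
      - \sum_(k < n | k != i)
          (- 2 * m i * m k * cos (eq_dist phi i k) / sin (eq_dist phi i k) ^+ 3)
    else - 2 * m i * m j * cos (eq_dist phi i j) / sin (eq_dist phi i j) ^+ 3.

Definition Mmat (m : 'I_n -> R) : 'M[R]_n := diag_mx (\row_i m i).

Definition Homega (m phi : 'I_n -> R) (omega : R) : 'M[R]_n :=
  Hmat m phi - omega ^+ 2 *: Mmat m.

Definition cmx (p q : nat) (A : 'M[R]_(p, q)) : 'M[R[i]]_(p, q) :=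
  map_mx (fun x => x%:C) A.

Definition MinvC (m : 'I_n -> R) : 'M[R[i]]_n := invmx (cmx (Mmat m)).

Definition Lmat (m phi : 'I_n -> R) (omega : R) : 'M[R[i]]_((n + n) + (n + n)) :=
  block_mx 0 (block_mx (MinvC m) 0 0 (MinvC m))
           (block_mx (cmx (Homega m phi omega)) 0 0 (cmx (Gmat m phi))) 0.

End Defs.

Definition diag_pm (R : realType) (s : R[i]) : 'M[R[i]]_2 :=
  \matrix_(i < 2, j < 2)
    if i == j then (if i == 0 then s else - s) else 0.

Definition jordan0 (R : realType) : 'M[R[i]]_2 :=
  \matrix_(i < 2, j < 2) if (val i == 0%N) && (val j == 1%N) then 1 else 0.

(* Main.v *)
Require Import Defs.
From HB Require Import structures.
From mathcomp Require Import all_boot all_order all_algebra.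
From mathcomp Require Import all_classical all_reals.
From mathcomp Require Import topology normedtype derive realfun trigo.
From mathcomp Require Import complex.
Import Order.TTheory GRing.Theory Num.Theory.
Local Open Scope ring_scope.
Local Open Scope complex_scope.
Lemma inv_uniq (C : fieldType) n (A B : 'M[C]_n) : A *m B = 1%:M -> invmx A = B.
Proof.
move=> AB; have [Au _] := mulmx1_unit AB.
by rewrite -[invmx A]mulmx1 -AB mulmxA mulVmx // mul1mx.
Qed.

Lemma diag_gen (C : numClosedFieldType) n (S D E : 'M[C]_n) :
  D *m E = 1%:M ->
  (E *m S *m E) \is symmetricmx -> (E *m S *m E) \is a mxOver Num.real ->
  diagonalizable (S *m invmx (D *m D)).
Proof.
move=> DE Ks Kr.
have ED := mulmx1C DE.
have [Du Eu] := mulmx1_unit DE.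
have iD : invmx D = E.
  by rewrite -[invmx D]mulmx1 -DE mulmxA mulVmx // mul1mx.
have iE : invmx E = D.
  by rewrite -[invmx E]mulmx1 -ED mulmxA mulVmx // mul1mx.
set K := E *m S *m E in Ks Kr.
have /orthomx_spectralP KE := symmetric_normalmx Ks Kr.
set Q := spectralmx K in KE. set d := spectral_diag K in KE.
have Qu : Q \in unitmx by apply: spectral_unit.
have SE : S = D *m K *m D.
  by rewrite /K !mulmxA DE mul1mx -mulmxA ED mulmx1.
exists (Q *m E); first by rewrite unitmx_mul Qu Eu.
rewrite /similar_to /= conjumx; last by rewrite unitmx_mul Qu Eu.
have -> : Q *m E *m (S *m invmx (D *m D)) *m invmx (Q *m E) = diag_mx d.
  have -> : invmx (Q *m E) = D *m invmx Q.
    by apply: inv_uniq; rewrite mulmxA -(mulmxA Q) ED mulmx1 mulmxV.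
  have -> : invmx (D *m D) = E *m E.
    by apply: inv_uniq; rewrite mulmxA -(mulmxA D) DE mulmx1 DE.
  rewrite SE KE.
  rewrite !mulmxA -(mulmxA Q E D) ED mulmx1 mulmxV // mul1mx.
  rewrite -!(mulmxA _ D E) DE !mulmx1 -!(mulmxA _ E D) ED !mulmx1.
  rewrite -(mulmxA _ Q (invmx Q)) mulmxV // mulmx1.
  done.
exact: diag_mx_is_diag.
Qed.
Section RealPart.
Variable R : realType.

Lemma cmxE p q (A : 'M[R]_(p, q)) : cmx A = map_mx (real_complex R) A.
Proof. by []. Qed.

Lemma diag_real n (S : 'M[R]_n) (m : 'I_n -> R) :
  (forall i, 0 < m i) -> S^T = S -> diagonalizable (cmx S *m MinvC m).
Proof.
move=> mpos St.
pose sq i := Num.sqrt (m i).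
have sq0 i : sq i != 0 by rewrite gt_eqF // sqrtr_gt0.
pose Dr := diag_mx (\row_i sq i). pose Er := diag_mx (\row_i (sq i)^-1).
have DEr : Dr *m Er = 1%:M.
  rewrite mulmx_diag -diag_const_mx; congr diag_mx; apply/rowP => i.
  by rewrite !mxE divff.
have DDr : Dr *m Dr = Mmat m.
  rewrite mulmx_diag /Mmat; congr diag_mx; apply/rowP => i.
  by rewrite !mxE -expr2 sqr_sqrtr // ltW.
rewrite /MinvC -DDr !cmxE map_mxM.
apply: (@diag_gen _ _ _ _ (map_mx (real_complex R) Er)).
- by rewrite -map_mxM DEr map_mx1.
- rewrite -!map_mxM; apply/is_hermitianmxP.
  rewrite expr0 scale1r map_mx_id // map_trmx !trmx_mul St tr_diag_mx mulmxA.
  by [].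
- apply/mxOverP => i j; rewrite -!map_mxM mxE.
  set x := (_ i j). rewrite realE !lecE /= eqxx /=; exact: le_total.
Qed.
End RealPart.
Section Gen.
Variable C : fieldType.

Lemma rank2 N (p1 p2 : 'cV[C]_N) :
  (forall a b : C, a *: p1 + b *: p2 = 0 -> a = 0 /\ b = 0) ->
  \rank (row_mx p1 p2 : 'M_(N, 1 + 1)) = 2%N.
Proof.
move=> indep; set P := row_mx p1 p2.
have inj (w : 'cV_(1 + 1)) : P *m w = 0 -> w = 0.
  rewrite -[w](@vsubmxK C 1 1) mul_row_col.
  rewrite (mx11_scalar (usubmx w)) (mx11_scalar (dsubmx w)) !mul_mx_scalar.
  move=> /indep [-> ->]; apply/matrixP => i j. {
  by rewrite !mxE; case: splitP => k _; rewrite !mxE ?mul0rn. }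
have K0 : kermx P^T = 0.
  apply/row_matrixP => i; rewrite row0.
  have h : row i (kermx P^T) *m P^T = 0 by rewrite -row_mul mulmx_ker row0.
  have e : P *m (row i (kermx P^T))^T = 0.
    by apply: trmx_inj; rewrite trmx_mul trmxK h trmx0.
  by have := inj _ e; move/(congr1 trmx); rewrite trmxK trmx0.
have := mxrank_ker P^T; rewrite K0 mxrank0 mxrank_tr => /esym /eqP.
rewrite subn_eq0 => h; apply/eqP; rewrite eqn_leq h.
by rewrite -mxrank_tr rank_leq_row.
Qed.

Lemma diag_pm_block (R : realType) (s : R[i]) :
  diag_pm s = block_mx (s%:M : 'M_1) 0 0 ((- s)%:M) :> 'M_(1 + 1).
Proof.
apply/matrixP => i j.
case: i j => [[|[|//]] Hi] [[|[|//]] Hj]; rewrite !mxE /=.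
all: case: splitP => k /= Hk; rewrite !mxE; case: splitP => l /= Hl; rewrite ?mxE ?ord1 ?eqxx ?mulr1n ?mulr0n //.
all: by move: Hk Hl; case: k => [[|k] ?]; case: l => [[|l] ?].
Qed.

Lemma jordan0_block (R : realType) :
  jordan0 R = block_mx 0 (1%:M : 'M_1) 0 0 :> 'M_(1 + 1).
Proof.
apply/matrixP => i j.
case: i j => [[|[|//]] Hi] [[|[|//]] Hj]; rewrite !mxE /=.
all: case: splitP => k /= Hk; rewrite !mxE; case: splitP => l /= Hl; rewrite ?mxE ?ord1 ?eqxx ?mulr1n ?mulr0n //.
all: by move: Hk Hl; case: k => [[|k] ?]; case: l => [[|l] ?].
Qed.
Lemma mul_diag_pm (R : realType) N (p1 p2 : 'cV[R[i]]_N) s :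
  (row_mx p1 p2 : 'M_(N, 2)) *m diag_pm s = row_mx (s *: p1) (- s *: p2).
Proof.
rewrite diag_pm_block.
rewrite (@mul_row_block _ N 1 1 1 1 p1 p2).
by rewrite !mulmx0 addr0 add0r !mul_mx_scalar.
Qed.

Lemma mul_jordan0 (R : realType) N (p1 p2 : 'cV[R[i]]_N) :
  (row_mx p1 p2 : 'M_(N, 2)) *m jordan0 R = row_mx (0 : 'cV_N) p1.
Proof.
rewrite jordan0_block.
rewrite (@mul_row_block _ N 1 1 1 1 p1 p2).
by rewrite !mulmx0 ?addr0 ?add0r mulmx1.
Qed.
End Gen.

Lemma col4_eq0 (C : zmodType) k (a b c d : 'cV[C]_k) :
  col_mx (col_mx a b) (col_mx c d) = 0 -> [/\ a = 0, b = 0, c = 0 & d = 0].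
Proof.
move/eqP; rewrite !col_mx_eq0 => /andP[/andP[/eqP ? /eqP ?] /andP[/eqP ? /eqP ?]].
by split.
Qed.

Section Eig.
Variable R : realType.
Local Notation C := R[i].
Variables (k : nat) (Mi H G : 'M[C]_k).
Hypothesis Mu : Mi \in unitmx.
Let L := block_mx 0 (block_mx Mi 0 0 Mi) (block_mx H 0 0 G) 0.

Lemma Mi_nz (u : 'cV[C]_k) : u != 0 -> Mi *m u != 0.
Proof.
apply: contra => /eqP h; apply/eqP.
by rewrite -(mulKmx Mu u) h mulmx0.
Qed.

Lemma two_zero (a b : C) : a + b = 0 -> a - b = 0 -> a = 0 /\ b = 0.
Proof.
move=> e1 e2.
have h : a *+ 2 = (a + b) + (a - b) by rewrite addrACA subrr addr0 mulr2n.
have a0 : a = 0.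
  by apply/eqP; move: h; rewrite e1 e2 addr0 => /eqP; rewrite mulrn_eq0.
by split => //; move: e1; rewrite a0 add0r.
Qed.

Lemma eigA_nz (u : 'cV[C]_k) (lam s : C) :
  u != 0 -> H *m Mi *m u = lam *: u -> lam != 0 -> s ^+ 2 = lam ->
  exists P : 'M[C]_((k + k) + (k + k), 2),
    \rank P = 2%N /\ L *m P = P *m diag_pm s.
Proof.
move=> u0 eig l0 sl.
have s0 : s != 0 by apply: contra l0 => /eqP s0; rewrite -sl s0 expr0n.
have x0 : Mi *m u != 0 by exact: Mi_nz.
set x := Mi *m u in x0.
pose p1 : 'cV[C]_((k + k) + (k + k)) := col_mx (col_mx x 0) (col_mx (s *: u) 0).
pose p2 : 'cV[C]_((k + k) + (k + k)) := col_mx (col_mx x 0) (col_mx (- s *: u) 0).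
exists (row_mx p1 p2); split.
  apply: rank2 => a b.
  rewrite /p1 /p2 !scale_col_mx !add_col_mx !scaler0 !addr0 => /col4_eq0 [/eqP h1 _ /eqP h2 _].
  move: h1; rewrite -scalerDl scalemx_eq0 (negPf x0) orbF => /eqP e1.
  move: h2; rewrite !scalerA -scalerDl scalemx_eq0 (negPf u0) orbF.
  rewrite mulrN -mulNr -mulrDl mulf_eq0 (negPf s0) orbF => /eqP e2.
  exact: two_zero.
rewrite (mul_mx_row L p1 p2) mul_diag_pm.
rewrite /L /p1 /p2 !mul_block_col !mul0mx !mulmx0 !addr0 !add0r !scale_col_mx !scaler0.
rewrite -!scalemxAr /x !mulmxA eig -sl expr2 !scalerA mulNr mulrN opprK.
by [].
Qed.

Lemma eigB_nz (u : 'cV[C]_k) (lam s : C) :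
  u != 0 -> G *m Mi *m u = lam *: u -> lam != 0 -> s ^+ 2 = lam ->
  exists P : 'M[C]_((k + k) + (k + k), 2),
    \rank P = 2%N /\ L *m P = P *m diag_pm s.
Proof.
move=> u0 eig l0 sl.
have s0 : s != 0 by apply: contra l0 => /eqP s0; rewrite -sl s0 expr0n.
have x0 : Mi *m u != 0 by exact: Mi_nz.
set x := Mi *m u in x0.
pose p1 : 'cV[C]_((k + k) + (k + k)) := col_mx (col_mx 0 x) (col_mx 0 (s *: u)).
pose p2 : 'cV[C]_((k + k) + (k + k)) := col_mx (col_mx 0 x) (col_mx 0 (- s *: u)).
exists (row_mx p1 p2); split.
  apply: rank2 => a b.
  rewrite /p1 /p2 !scale_col_mx !add_col_mx !scaler0 !addr0 => /col4_eq0 [_ /eqP h1 _ /eqP h2].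
  move: h1; rewrite -scalerDl scalemx_eq0 (negPf x0) orbF => /eqP e1.
  move: h2; rewrite !scalerA -scalerDl scalemx_eq0 (negPf u0) orbF.
  rewrite mulrN -mulNr -mulrDl mulf_eq0 (negPf s0) orbF => /eqP e2.
  exact: two_zero.
rewrite (mul_mx_row L p1 p2) mul_diag_pm.
rewrite /L /p1 /p2 !mul_block_col !mul0mx !mulmx0 !addr0 !add0r !scale_col_mx !scaler0.
rewrite -!scalemxAr /x !mulmxA eig -sl expr2 !scalerA mulNr mulrN opprK.
by [].
Qed.

Lemma eigA_z (u : 'cV[C]_k) :
  u != 0 -> H *m Mi *m u = 0 *: u ->
  exists P : 'M[C]_((k + k) + (k + k), 2),
    \rank P = 2%N /\ L *m P = P *m jordan0 R.
Proof.
move=> u0 eig.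
have x0 : Mi *m u != 0 by exact: Mi_nz.
set x := Mi *m u in x0.
pose p1 : 'cV[C]_((k + k) + (k + k)) := col_mx (col_mx x 0) (col_mx 0 0).
pose p2 : 'cV[C]_((k + k) + (k + k)) := col_mx (col_mx 0 0) (col_mx u 0).
exists (row_mx p1 p2); split.
  apply: rank2 => a b.
  rewrite /p1 /p2 !scale_col_mx !add_col_mx !scaler0 !addr0 !add0r => /col4_eq0 [/eqP h1 _ /eqP h2 _].
  move: h1; rewrite scalemx_eq0 (negPf x0) orbF => /eqP e1.
  by move: h2; rewrite scalemx_eq0 (negPf u0) orbF => /eqP e2.
rewrite (mul_mx_row L p1 p2) mul_jordan0.
rewrite /L /p1 /p2 !mul_block_col !mul0mx !mulmx0 !addr0 !add0r.
rewrite /x !mulmxA eig scale0r !col_mx0.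
by [].
Qed.

Lemma eigB_z (u : 'cV[C]_k) :
  u != 0 -> G *m Mi *m u = 0 *: u ->
  exists P : 'M[C]_((k + k) + (k + k), 2),
    \rank P = 2%N /\ L *m P = P *m jordan0 R.
Proof.
move=> u0 eig.
have x0 : Mi *m u != 0 by exact: Mi_nz.
set x := Mi *m u in x0.
pose p1 : 'cV[C]_((k + k) + (k + k)) := col_mx (col_mx 0 x) (col_mx 0 0).
pose p2 : 'cV[C]_((k + k) + (k + k)) := col_mx (col_mx 0 0) (col_mx 0 u).
exists (row_mx p1 p2); split.
  apply: rank2 => a b.
  rewrite /p1 /p2 !scale_col_mx !add_col_mx !scaler0 !addr0 !add0r => /col4_eq0 [_ /eqP h1 _ /eqP h2].
  move: h1; rewrite scalemx_eq0 (negPf x0) orbF => /eqP e1.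
  by move: h2; rewrite scalemx_eq0 (negPf u0) orbF => /eqP e2.
rewrite (mul_mx_row L p1 p2) mul_jordan0.
rewrite /L /p1 /p2 !mul_block_col !mul0mx !mulmx0 !addr0 !add0r.
rewrite /x !mulmxA eig scale0r !col_mx0.
by [].
Qed.
End Eig.

Section Sym.
Variables (R : realType) (n : nat) (m phi : 'I_n -> R) (omega : R).

Lemma eq_dist_sym i j : eq_dist phi i j = eq_dist phi j i.
Proof.
by rewrite /eq_dist /sph_dist /sph_cos /equator -[phi j - phi i]opprB cosN.
Qed.

Lemma Hsym : (Hmat m phi)^T = Hmat m phi.
Proof.
apply/matrixP => i j; rewrite !mxE eq_sym; case: eqP => [->|_]; first done.
by rewrite eq_dist_sym (mulrC (m j)).
Qed.

Lemma Gsym : (Gmat m phi)^T = Gmat m phi.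
Proof.
apply/matrixP => i j; rewrite !mxE eq_sym; case: eqP => [->|_]; first done.
by rewrite eq_dist_sym [- 2 * m j * m i]mulrAC.
Qed.

Lemma Homega_sym : (Homega m phi omega)^T = Homega m phi omega.
Proof.
by rewrite /Homega linearB linearZ /= Hsym /Mmat tr_diag_mx.
Qed.

Lemma Minv_unit : (forall i, 0 < m i) -> MinvC m \in unitmx.
Proof.
move=> mpos; rewrite /MinvC unitmx_inv.
have h : cmx (Mmat m) *m cmx (diag_mx (\row_i (m i)^-1)) = 1%:M.
  rewrite !cmxE -map_mxM /Mmat mulmx_diag.
  have -> : diag_mx (\row_j ((\row_i m i) 0 j * (\row_i (m i)^-1) 0 j)) = 1%:M :> 'M[R]_n.
    rewrite -diag_const_mx; congr diag_mx; apply/rowP => i.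
    by rewrite !mxE divff // gt_eqF.
  by rewrite map_mx1.
by case: (mulmx1_unit h).
Qed.
End Sym.

Theorem lemma2 (R : realType) (n : nat) (m : 'I_n -> R) (omega : R)
    (phi : 'I_n -> R) :
  (3 <= n)%N ->
  (forall i, 0 < m i) ->
  fixed_point m phi ->
  let A := cmx (Homega m phi omega) *m MinvC m in
  let B := cmx (Gmat m phi) *m MinvC m in
  let L := Lmat m phi omega in
  diagonalizable A /\ diagonalizable B /\
  forall (X : 'M[R[i]]_n), (X = A \/ X = B) ->
  forall (u : 'cV[R[i]]_n) (lambda : R[i]),
    u != 0 -> X *m u = lambda *: u ->
    (lambda != 0 -> forall s : R[i], s ^+ 2 = lambda ->
       exists P : 'M[R[i]]_((n + n) + (n + n), 2),
         \rank P = 2%N /\ L *m P = P *m diag_pm s) /\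
    (lambda = 0 ->
       exists P : 'M[R[i]]_((n + n) + (n + n), 2),
         \rank P = 2%N /\ L *m P = P *m jordan0 R).
Proof.
move=> _ mpos _ A B L.
split; first by apply: diag_real => //; exact: Homega_sym.
split; first by apply: diag_real => //; exact: Gsym.
have Mu : MinvC m \in unitmx by apply: Minv_unit.
move=> X [->|->] u lam u0 eig; split.
- by move=> l0 s sl; exact: (@eigA_nz R n (MinvC m) (cmx (Homega m phi omega)) (cmx (Gmat m phi)) Mu u lam s u0 eig l0 sl).
- by move=> l0; rewrite l0 in eig; exact: (@eigA_z R n (MinvC m) (cmx (Homega m phi omega)) (cmx (Gmat m phi)) Mu u u0 eig).
- by move=> l0 s sl; exact: (@eigB_nz R n (MinvC m) (cmx (Homega m phi omega)) (cmx (Gmat m phi)) Mu u lam s u0 eig l0 sl).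
- by move=> l0; rewrite l0 in eig; exact: (@eigB_z R n (MinvC m) (cmx (Homega m phi omega)) (cmx (Gmat m phi)) Mu u u0 eig).
Qed.
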